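(* Let $A$ be the semi-local highest-score matrix of strings $x$ and $y$, and let $w,r$ be positive integers. A single critical point of the $(w,r)$-restricted highest-score matrix $A^{w,r}$ can be represented using $O(\log(w/r))$ bits, in such a way that all defined entries of $A^{w,r}$ can still be recovered from the stored representation of the critical points.
   Context: Notation: $[i:j] = \{i, \ldots, j\}$ and $\langle i:j\rangle = \{i+\tfrac12, \ldots, j-\tfrac12\}$. The alignment dag of $x = x_1\ldots x_m$ and $y = y_1\ldots y_n$ has vertices $v_{k,l}$, $k\in[0:m]$, $l\in[0:n]$, horizontal and vertical edges of score $0$, and diagonal edges $v_{k-1,l-1}\to v_{k,l}$ of score $1$ present exactly when $x_k=y_l$. The (semi-local) highest-score matrix $A$ has entry $A(i,j)$ equal to the maximum path score from the top boundary at column $i$ to the bottom boundary at column $j$ (the LLCS of $x$ and the corresponding substring of $y$), in Tiskin's semi-local framework. A critical point of $A$ is a pair of odd half-integers $(\hat{\imath},\hat{\jmath})$ with $A(\hat{\imath}+\tfrac12,\hat{\jmath}-\tfrac12)+1 = A(\hat{\imath}-\tfrac12,\hat{\jmath}-\tfrac12) = A(\hat{\imath}+\tfrac12,\hat{\jmath}+\tfrac12) = A(\hat{\imath}-\tfrac12,\hat{\jmath}+\tfrac12)$; its span is $\hat{\jmath}-\hat{\imath}$. Known fact (Tiskin): the critical points form a permutation matrix $D_A$ and $A(i,j) = j-i-\#\{(\hat{\imath},\hat{\jmath}) \text{ critical}: \hat{\imath}>i,\ \hat{\jmath}<j\}$. The $(w,r)$-restricted highest-score matrix is $A^{w,r}(i,j)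 = A(i,j)$ if $j-i\le w$ and $i \bmod r = j \bmod r = 0$, undefined otherwise; its critical points are those of $A$ relevant to these entries (i.e. with span less than $w$). *)

(* Defs.v *)
From mathcomp Require Import all_boot all_order all_algebra.
Set Implicit Arguments. Unset Strict Implicit. Unset Printing Implicit Defensive.
Import Order.TTheory GRing.Theory Num.Theory.
Local Open Scope ring_scope.

Section Semilocal.
Variable T : eqType.

(* character of x matches character of the padded string (None = wildcard) *)
Definition cmatch (a : T) (b : option T) : bool :=
  if b is Some b' then a == b' else true.

(* length of a longest common subsequence (= max path score in the alignment dag) *)
Fixpoint llcs (x : seq T) (y : seq (option T)) : nat :=
  match x with
  | [::] => 0%N
  | a :: x' =>
    (fix g (y : seq (option T)) : nat :=
       match y with
       | [::] => 0%N
       | b :: y' => if cmatch a b then (llcs x' y').+1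
                    else maxn (llcs x' (b :: y')) (g y')
       end) y
  end.

(* Tiskin's extended string: y padded by m wildcards on both sides;
   column k of the extended dag, k in [-m : n+m], is offset k+m. *)
Definition padded (m : nat) (y : seq T) : seq (option T) :=
  nseq m None ++ map Some y ++ nseq m None.

Definition psub (m : nat) (y : seq T) (i j : int) : seq (option T) :=
  drop (absz (i + m%:Z)) (take (absz (j + m%:Z)) (padded m y)).

(* semi-local highest-score matrix A(i,j), i,j in [-m : n+m];
   A(i,j) = j - i for i > j (Tiskin's convention). *)
Definition hsm (x y : seq T) (i j : int) : int :=
  if i <= j then (llcs x (psub (size x) y i j))%:Z else j - i.

Definition in_dom (m n : nat) (k : int) : bool :=
  (- m%:Z <= k) && (k <= n%:Z + m%:Z).

(* critical point: the pair of odd half-integers (a + 1/2, b + 1/2) *)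
Definition critical (x y : seq T) (a b : int) : bool :=
  [&& in_dom (size x) (size y) a, in_dom (size x) (size y) (a + 1),
      in_dom (size x) (size y) b, in_dom (size x) (size y) (b + 1),
      hsm x y (a + 1) b + 1 == hsm x y a b,
      hsm x y a b == hsm x y (a + 1) (b + 1) &
      hsm x y (a + 1) (b + 1) == hsm x y a (b + 1)].

Definition critical_wr (w : nat) (x y : seq T) (a b : int) : bool :=
  critical x y a b && (b - a < w%:Z).

Definition defined_wr (w r : nat) (x y : seq T) (i j : int) : bool :=
  [&& in_dom (size x) (size y) i, in_dom (size x) (size y) j,
      j - i <= w%:Z, (i %% r%:Z)%Z == 0 & (j %% r%:Z)%Z == 0].

End Semilocal.

(* Main.v *)
Require Import Defs.
From mathcomp Require Import all_boot all_order all_algebra zify.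
Import Order.TTheory GRing.Theory Num.Theory.
Set Implicit Arguments. Unset Strict Implicit.

Module MP1.

Section LCS.
Variable T : eqType.
Implicit Types (x : seq T) (y : seq (option T)).

Lemma llcs0 y : llcs (@nil T) y = 0%N. Proof. by []. Qed.
Lemma llcsn a x : llcs (a::x) [::] = 0%N. Proof. by []. Qed.
Lemma llcsc a x b y : llcs (a::x) (b::y) =
  if cmatch a b then (llcs x y).+1 else maxn (llcs x (b::y)) (llcs (a::x) y).
Proof. by []. Qed.

Inductive al : seq T -> seq (option T) -> nat -> Prop :=
| al_nl y : al [::] y 0
| al_nr x : al x [::] 0
| al_sx a x y k : al x y k -> al (a::x) y k
| al_sy x b y k : al x y k -> al x (b::y) k
| al_m a x b y k : cmatch a b -> al x y k -> al (a::x) (b::y) k.+1.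

Lemma al0 x y : al x y 0.
Proof. elim: x => [|a x IH]; [constructor | exact: al_sx]. Qed.

Lemma al_dropy x b y k : al x (b::y) k -> exists k', al x y k' /\ (k <= k'.+1)%N.
Proof.
move E: (b::y) => yy H; elim: H b y E => //.
- move=> y0 b y _; exists 0%N; split=> //; exact: al0.
- move=> a x0 y0 k0 H IH b y E; case: (IH b y E) => k' [H1 H2].
  exists k'; split=> //; exact: al_sx.
- move=> x0 b0 y0 k0 H _ b y [_ ->]; exists k0; split => //.
- move=> a x0 b0 y0 k0 _ H _ b y [_ ->]; exists k0; split => //; exact: al_sx.
Qed.

Lemma al_dropx a x y k : al (a::x) y k -> exists k', al x y k' /\ (k <= k'.+1)%N.
Proof.
move E: (a::x) => xx H; elim: H a x E => //.
- move=> x0 a x _; exists 0%N; split=> //; exact: al0.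
- move=> a0 x0 y0 k0 H _ a x [_ ->]; exists k0; split => //.
- move=> x0 b y0 k0 H IH a x E; case: (IH a x E) => k' [H1 H2].
  exists k'; split=> //; exact: al_sy.
- move=> a0 x0 b0 y0 k0 _ H _ a x [_ ->]; exists k0; split => //; exact: al_sy.
Qed.

Lemma al_llcs x y : al x y (llcs x y).
Proof.
elim: x y => [|a x IHx] y; first by constructor.
elim: y => [|b y IHy]; first by constructor.
rewrite llcsc; case: ifP => hm; first by apply: al_m.
case: (leqP (llcs x (b::y)) (llcs (a::x) y)) => h.
- exact: al_sy.
- exact: al_sx.
Qed.

Lemma al_nil_l y k : al [::] y k -> k = 0%N.
Proof. move E: [::] => xx H; elim: H E => //. Qed.
Lemma al_nil_r x k : al x [::] k -> k = 0%N.
Proof. move E: [::] => yy H; elim: H E => //. Qed.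

Lemma al_inv a x b y k : al (a::x) (b::y) k ->
  [\/ al x (b::y) k, al (a::x) y k | exists k0, [/\ k = k0.+1, cmatch a b & al x y k0]].
Proof.
move E1: (a::x) => xx; move E2: (b::y) => yy H; case: H E1 E2 => //.
- by move=> a0 x0 y0 k0 H [? ?] ?; subst; apply: Or31.
- by move=> x0 b0 y0 k0 H ? [? ?]; subst; apply: Or32.
- by move=> a0 x0 b0 y0 k0 hm H [? ?] [? ?]; subst; apply: Or33; exists k0.
Qed.

Lemma llcs_al x y k : al x y k -> (k <= llcs x y)%N.
Proof.
move: {2}(size x + size y)%N (leqnn (size x + size y)%N) => n.
elim: n x y k => [|n IH] x y k hs H.
- by case: x hs H => [|a x] // _ /al_nil_l ->.
- case: x hs H => [|a x] hs H; first by rewrite (al_nil_l H).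
  case: y hs H => [|b y] hs H; first by rewrite (al_nil_r H).
  rewrite /= in hs.
  rewrite llcsc; case: ifP => hm; case: (al_inv H) => [H3|H3|[k0 [-> hm' H3]]].
  - case: (al_dropy H3) => k' [H1 H2].
    have := IH x y k' ltac:(lia) H1; lia.
  - case: (al_dropx H3) => k' [H1 H2].
    have := IH x y k' ltac:(lia) H1; lia.
  - have := IH x y k0 ltac:(lia) H3; lia.
  - have := IH x (b::y) k ltac:(rewrite /=; lia) H3; lia.
  - have := IH (a::x) y k ltac:(rewrite /=; lia) H3; lia.
  - by rewrite hm' in hm.
Qed.

Lemma al_cat_r x y u k : al x y k -> al x (y ++ u) k.
Proof.
elim=> //=.
- move=> *; exact: al_nl.
- move=> x0; exact: al0.
- move=> *; exact: al_sx.
- move=> *; exact: al_sy.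
- move=> *; exact: al_m.
Qed.

Lemma al_cat_l x y u k : al x y k -> al x (u ++ y) k.
Proof. by elim: u => [|b u IH] //= H; apply: al_sy; apply: IH. Qed.

Lemma al_size x y k : al x y k -> (k <= size y)%N /\ (k <= size x)%N.
Proof. elim=> //= *; lia. Qed.

Lemma al_catx x1 y1 k1 x2 y2 k2 :
  al x1 y1 k1 -> al x2 y2 k2 -> al (x1 ++ x2) (y1 ++ y2) (k1 + k2).
Proof.
move=> H; elim: H x2 y2 k2.
- by move=> y x2 y2 k2 H; rewrite add0n; apply: al_cat_l.
- move=> x x2 y2 k2 H; rewrite add0n /=.
  by elim: x => [|a x IH] //=; apply: al_sx.
- by move=> a x y k _ IH x2 y2 k2 H /=; apply: al_sx; apply: IH.
- by move=> x b y k _ IH x2 y2 k2 H /=; apply: al_sy; apply: IH.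
- by move=> a x b y k hm _ IH x2 y2 k2 H /=; rewrite addSn; apply: al_m => //; apply: IH.
Qed.

Lemma al_rem_suffix x y u k : al x (y ++ u) k ->
  exists k', al x y k' /\ (k <= k' + size u)%N.
Proof.
move E: (y ++ u) => yy H; elim: H y E.
- by move=> y0 y _; exists 0%N; split; [exact: al_nl|].
- by move=> x0 y _; exists 0%N; split; [exact: al0|].
- move=> a x0 y0 k0 _ IH y E; case: (IH y E) => k' [H1 H2].
  by exists k'; split => //; apply: al_sx.
- move=> x0 b y0 k0 H IH [|c y] E.
  + exists 0%N; split; first exact: al0.
    rewrite /= in E; rewrite E; have [h _] := al_size (al_sy b H); rewrite /= in h *; lia.
  + case: E => ? E; subst c; case: (IH y E) => k' [H1 H2].
    by exists k'; split => //; apply: al_sy.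
- move=> a x0 b y0 k0 hm H IH [|c y] E.
  + exists 0%N; split; first exact: al0.
    rewrite /= in E; rewrite E; have [h _] := al_size (al_m hm H); rewrite /= in h *; lia.
  + case: E => ? E; subst c; case: (IH y E) => k' [H1 H2].
    by exists k'.+1; split; [apply: al_m|lia].
Qed.

Lemma al_rem_prefix x y u k : al x (u ++ y) k ->
  exists k', al x y k' /\ (k <= k' + size u)%N.
Proof.
elim: u k => [|b u IH] k /= H; first by exists k; split => //; lia.
case: (al_dropy H) => k1 [H1 H2]; case: (IH _ H1) => k' [H3 H4].
exists k'; split => //; lia.
Qed.

Lemma al_nseq x : al x (nseq (size x) None) (size x).
Proof. by elim: x => [|a x IH] /=; [exact: al_nl| apply: al_m]. Qed.

Lemma al_split a x y k : al (a::x) y k ->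
  exists y1 y2 k1 k2, [/\ y = y1 ++ y2, al [:: a] y1 k1, al x y2 k2 & (k <= k1 + k2)%N].
Proof.
move E: (a::x) => xx H; elim: H a x E => //.
- move=> x0 a x _; exists [::], [::], 0%N, 0%N; split => //; exact: al0.
- move=> a0 x0 y0 k0 H _ a x [? ?]; subst.
  exists [::], y0, 0%N, k0; split => //; exact: al0.
- move=> x0 b y0 k0 H IH a x E; case: (IH a x E) => y1 [y2 [k1 [k2 [-> H1 H2 H3]]]].
  exists (b :: y1), y2, k1, k2; split => //; exact: al_sy.
- move=> a0 x0 b y0 k0 hm H _ a x [? ?]; subst.
  exists [:: b], y0, 1%N, k0; split => //; apply: al_m => //; exact: al0.
Qed.

Lemma al_single a y k : al [:: a] y k -> (k <= has (cmatch a) y)%N.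
Proof.
elim: y k => [|b y IH] k H; first by rewrite (al_nil_r H).
case: (al_inv H) => [H1|H1|[k0 [-> hm H1]]].
- by rewrite (al_nil_l H1).
- by rewrite /=; have := IH _ H1; case: (cmatch a b) => /=; case: (has _ _) => //; lia.
- by rewrite /= hm (al_nil_l H1).
Qed.

Lemma al_single' a y : has (cmatch a) y -> al [:: a] y 1.
Proof.
elim: y => [|b y IH] //= /orP [hm|hy].
- apply: al_m => //; exact: al_nl.
- apply: al_sy; exact: IH.
Qed.

Lemma L_cat_r x y u : (llcs x y <= llcs x (y ++ u) <= llcs x y + size u)%N.
Proof.
apply/andP; split; first exact/llcs_al/al_cat_r/al_llcs.
case: (al_rem_suffix (al_llcs x (y ++ u))) => k' [H1 H2].
have := llcs_al H1; lia.
Qed.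

Lemma L_cat_l x y u : (llcs x y <= llcs x (u ++ y) <= llcs x y + size u)%N.
Proof.
apply/andP; split; first exact/llcs_al/al_cat_l/al_llcs.
case: (al_rem_prefix (al_llcs x (u ++ y))) => k' [H1 H2].
have := llcs_al H1; lia.
Qed.

Lemma L_size x y : (llcs x y <= size y)%N /\ (llcs x y <= size x)%N.
Proof. exact: al_size (al_llcs x y). Qed.

Lemma L_super x1 y1 x2 y2 : (llcs x1 y1 + llcs x2 y2 <= llcs (x1 ++ x2) (y1 ++ y2))%N.
Proof. exact/llcs_al/al_catx/al_llcs/al_llcs. Qed.

Lemma L_consx a x y : (llcs x y <= llcs (a :: x) y)%N.
Proof. exact/llcs_al/al_sx/al_llcs. Qed.

Lemma L_split a x y : exists y1 y2, y = y1 ++ y2 /\ llcs (a :: x) y = (llcs [:: a] y1 + llcs x y2)%N.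
Proof.
case: (al_split (al_llcs (a::x) y)) => y1 [y2 [k1 [k2 [E H1 H2 H3]]]].
exists y1, y2; split => //; apply/eqP; rewrite eqn_leq; apply/andP; split.
- have := llcs_al H1; have := llcs_al H2; lia.
- by rewrite E; exact: (L_super [:: a] y1 x y2).
Qed.

Lemma L_single a y : llcs [:: a] y = nat_of_bool (has (cmatch a) y).
Proof.
apply/eqP; rewrite eqn_leq; apply/andP; split; first exact/al_single/al_llcs.
by case E: (has (cmatch a) y) => //=; have := llcs_al (al_single' E).
Qed.

Lemma L_wild x u : llcs x (u ++ nseq (size x) None) = size x.
Proof.
apply/eqP; rewrite eqn_leq; apply/andP; split; first by case: (L_size x (u ++ nseq (size x) None)).
exact/llcs_al/al_cat_l/al_nseq.
Qed.

Lemma L_nil x : llcs x [::] = 0%N.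
Proof. by case: x. Qed.

End LCS.

End MP1.
Import MP1.

Module MP2.
Local Open Scope ring_scope.

Section Win.
Variable T : eqType.
Variable z : seq (option T).
Local Notation N := (size z).

Definition sub (p q : nat) := drop p (take q z).

Definition W (x : seq T) (p q : nat) : int :=
  if (p <= q)%N then (llcs x (sub p q))%:Z else q%:Z - p%:Z.

Lemma drop_cat_le (S : Type) p (A B : seq S) : (p <= size A)%N ->
  drop p (A ++ B) = drop p A ++ B.
Proof.
move=> h; rewrite drop_cat; case: ltnP => h2 //.
have -> : p = size A by apply/eqP; rewrite eqn_leq h h2.
by rewrite subnn drop0 drop_size.
Qed.

Lemma size_sub p q : (q <= N)%N -> size (sub p q) = (q - p)%N.
Proof. by move=> h; rewrite /sub size_drop size_takel. Qed.

Lemma sub_cat p t q : (p <= t)%N -> (t <= q)%N -> (q <= N)%N ->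
  sub p q = sub p t ++ sub t q.
Proof.
move=> h1 h2 h3; rewrite /sub -{1}(cat_take_drop t (take q z)) take_takel //.
by rewrite drop_cat_le // size_takel //; apply: leq_trans h3.
Qed.

Lemma sub_nil p : sub p p = [::].
Proof. rewrite /sub; apply/eqP; rewrite -size_eq0 size_drop size_take; case: ifP; lia. Qed.

Lemma W_pp x p : W x p p = 0.
Proof. by rewrite /W leqnn sub_nil L_nil. Qed.

Lemma W_le x p q : (q <= N)%N -> W x p q <= q%:Z - p%:Z.
Proof.
move=> hq; rewrite /W; case: ifP => h //.
have [h1 _] := L_size x (sub p q); rewrite size_sub // in h1; lia.
Qed.

Lemma W_gt x p q : (q < p)%N -> W x p q = q%:Z - p%:Z.
Proof. by rewrite /W; case: leqP => //; lia. Qed.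

Lemma W_stepj x p q : (q < N)%N -> 0 <= W x p q.+1 - W x p q <= 1.
Proof.
move=> hq; rewrite /W; case: leqP => h1; case: leqP => h2; try lia.
- rewrite (sub_cat h2 (leqnSn q) hq).
  have := L_cat_r x (sub p q) (sub q q.+1); rewrite size_sub // subSnn; lia.
- have -> : p = q.+1 by lia.
  by rewrite sub_nil L_nil; lia.
Qed.

Lemma W_stepi x p q : (q <= N)%N -> 0 <= W x p q - W x p.+1 q <= 1.
Proof.
move=> hq; rewrite /W; case: leqP => h1; case: leqP => h2; try lia.
- have -> : p = q by lia.
  by rewrite sub_nil L_nil; lia.
- rewrite (@sub_cat p p.+1 q (leqnSn p)); [|lia|done].
  have := L_cat_l x (sub p.+1 q) (sub p p.+1).
  rewrite size_sub ?subSnn; last lia. lia.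
Qed.

End Win.

End MP2.
Import MP2.

Module MP3.
Local Open Scope ring_scope.

Definition monge (N : nat) (f : nat -> nat -> int) := forall i i' j j',
  (i <= i')%N -> (i' <= N)%N -> (j <= j')%N -> (j' <= N)%N ->
  f i' j + f i j' <= f i j + f i' j'.

Lemma local_monge N f :
  (forall i j, (i < N)%N -> (j < N)%N -> f i.+1 j + f i j.+1 <= f i j + f i.+1 j.+1) ->
  monge N f.
Proof.
move=> H.
have A : forall i j d, (i < N)%N -> (j + d <= N)%N ->
    f i.+1 j + f i (j + d)%N <= f i j + f i.+1 (j + d)%N.
  move=> i j d hi; elim: d => [|d IH] hd; first by rewrite addn0; lia.
  have h1 := IH ltac:(lia); have h2 := H i (j + d)%N hi ltac:(lia).
  rewrite addnS; lia.
have B : forall i e j j', (i + e <= N)%N -> (j <= j')%N -> (j' <= N)%N ->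
    f (i + e)%N j + f i j' <= f i j + f (i + e)%N j'.
  move=> i e j j'; elim: e => [|e IH] he hj hj'; first by rewrite addn0; lia.
  have h1 := IH ltac:(lia) hj hj'.
  have h2 := A (i + e)%N j (j' - j)%N ltac:(lia) ltac:(lia).
  rewrite subnKC // in h2; rewrite addnS; lia.
move=> i i' j j' hi hi' hj hj'; have := B i (i' - i)%N j j' ltac:(lia) hj hj'.
by rewrite subnKC.
Qed.

Lemma monge_prod N (A B C : nat -> nat -> int) :
  monge N A -> monge N B ->
  (forall i j t, (i <= N)%N -> (j <= N)%N -> (t <= N)%N -> A i t + B t j <= C i j) ->
  (forall i j, (i <= N)%N -> (j <= N)%N -> exists2 t, (t <= N)%N & C i j = A i t + B t j) ->
  monge N C.
Proof.
move=> MA MB H1 H2 i i' j j' hi hi' hj hj'.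
have [t1 ht1 E1] := H2 i' j ltac:(lia) ltac:(lia).
have [t2 ht2 E2] := H2 i j' ltac:(lia) ltac:(lia).
rewrite E1 E2.
have c1 := H1 i j t1 ltac:(lia) ltac:(lia) ht1.
have c2 := H1 i' j' t2 hi' hj' ht2.
have c3 := H1 i j t2 ltac:(lia) ltac:(lia) ht2.
have c4 := H1 i' j' t1 hi' hj' ht1.
case: (leqP t1 t2) => ht.
- have := MA i i' t1 t2 hi hi' ht ht2; lia.
- have := MB t2 t1 j j' (ltnW ht) ht1 hj hj'; lia.
Qed.

Section MongeW.
Variable T : eqType.
Variable z : seq (option T).
Local Notation N := (size z).
Local Notation W := (W z).
Local Notation sub := (sub z).

Lemma W_le_eq x p q : (p <= q)%N -> W x p q = (llcs x (sub p q))%:Z.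
Proof. by rewrite /MP2.W => ->. Qed.

Lemma monge_nil : monge N (W [::]).
Proof.
move=> i i' j j' *; rewrite /MP2.W !llcs0.
case: leqP => ?; case: leqP => ?; case: leqP => ?; case: leqP => ?; lia.
Qed.

Lemma monge_single a : monge N (W [:: a]).
Proof.
apply: local_monge => i j hi hj.
case: (ltngtP i j) => h.
- rewrite !W_le_eq; try lia.
  rewrite (@sub_cat _ z i i.+1 j.+1) ?(@sub_cat _ z i.+1 j j.+1) ?(@sub_cat _ z i i.+1 j); try lia.
  rewrite !L_single !has_cat.
  by case: (has _ (sub i i.+1)); case: (has _ (sub i.+1 j)); case: (has _ (sub j j.+1)).
- rewrite (W_gt _ _ h) (W_gt _ _ (_ : j.+1 < i.+1)%N) //.
  case: (ltngtP i j.+1) => h2; first lia.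
  + rewrite (W_gt _ _ h2) (W_gt _ _ (_ : j < i.+1)%N); lia.
  + subst; rewrite W_pp (W_gt _ _ (_ : j < j.+2)%N) //; lia.
- subst; rewrite !W_pp (W_gt _ _ (_ : j < j.+1)%N) //.
  rewrite W_le_eq // L_single; case: (has _ _) => /=; lia.
Qed.

Lemma monge_cons a x : monge N (W x) -> monge N (W (a :: x)).
Proof.
move=> Mx; apply: (monge_prod (monge_single a) Mx).
- move=> i j t hi hj ht; case: (leqP i j) => hij.
  + rewrite (W_le_eq (a::x) hij).
    case: (leqP i t) => hit; case: (leqP t j) => htj.
    * rewrite !W_le_eq // (sub_cat hit htj hj).
      have := L_super [:: a] (sub i t) x (sub t j); rewrite cat1s; lia.
    * rewrite W_le_eq // (W_gt _ _ htj) (sub_cat hij (ltnW htj) ht).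
      have := L_cat_r [:: a] (sub i j) (sub j t); rewrite size_sub //.
      have := L_super [:: a] (sub i j) x [::]; rewrite cat1s cats0 L_nil; lia.
    * rewrite (W_gt _ _ hit) W_le_eq; last lia.
      rewrite (sub_cat (ltnW hit) hij hj).
      have := L_cat_l x (sub i j) (sub t i); rewrite size_sub; last lia.
      have := L_consx a x (sub i j); lia.
    * lia.
  + rewrite (W_gt _ _ hij); have := W_le [:: a] i ht; have := W_le x t hj; lia.
- move=> i j hi hj; case: (leqP i j) => hij.
  + have [y1 [y2 [E L]]] := L_split a x (sub i j).
    have hs : (size y1 + size y2 = j - i)%N by rewrite -size_cat -E size_sub.
    exists (i + size y1)%N; first lia.
    have e1 : sub i j = sub i (i + size y1) ++ sub (i + size y1) j by apply: sub_cat; lia.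
    have hs1 : size (sub i (i + size y1)) = size y1 by rewrite size_sub; lia.
    move: (E); rewrite {1}e1 => /eqP; rewrite eqseq_cat // => /andP [/eqP E1 /eqP E2].
    rewrite W_le_eq // L !W_le_eq; try lia.
    by rewrite E1 E2 PoszD.
  + exists i => //; rewrite W_pp (W_gt _ _ hij) (W_gt _ _ hij); lia.
Qed.

Lemma monge_W x : monge N (W x).
Proof. elim: x => [|a x IH]; [exact: monge_nil | exact: monge_cons]. Qed.

End MongeW.

End MP3.
Import MP3.

Module MP4.
Local Open Scope ring_scope.

Section Crit.
Variable T : eqType.
Variable z : seq (option T).
Variable x : seq T.
Local Notation N := (size z).
Local Notation W := (MP2.W z x).

Definition Dm a b := W a b + W a.+1 b.+1 - W a.+1 b - W a b.+1.

Definition critW a b := [&& W a.+1 b + 1 == W a b, W a b == W a.+1 b.+1 &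
                            W a.+1 b.+1 == W a b.+1].

Lemma Dm_ge0 a b : (a < N)%N -> (b < N)%N -> 0 <= Dm a b.
Proof.
move=> ha hb; have := @monge_W _ z x _ _ _ _ (leqnSn a) ha (leqnSn b) hb.
rewrite /Dm; lia.
Qed.

Lemma Dm_crit a b : (a < N)%N -> (b < N)%N -> Dm a b = (critW a b)%:Z.
Proof.
move=> ha hb; have h0 := Dm_ge0 ha hb.
have s1 := @W_stepi _ z x a b (ltnW hb); have s2 := @W_stepi _ z x a b.+1 hb.
have s3 := @W_stepj _ z x a b hb; have s4 := @W_stepj _ z x a.+1 b hb.
move: h0; rewrite /Dm /critW.
case: (boolP [&& _, _ & _]) => [/and3P [/eqP e1 /eqP e2 /eqP e3]|hn] /=; first lia.
move=> h0; apply/eqP; rewrite -lte_anti h0 /=.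
case: (leP (W a b + W a.+1 b.+1 - W a.+1 b - W a b.+1) 0) => // hlt.
exfalso; move/negP: hn; apply; apply/and3P; split; apply/eqP; lia.
Qed.

Lemma tele2 p q p' q' : (p <= q)%N -> (p' <= q')%N ->
  \sum_(p <= a < q) \sum_(p' <= b < q') Dm a b =
  W p p' + W q q' - W q p' - W p q'.
Proof.
move=> hpq hpq'.
rewrite (@telescope_sumr_eq _ p q (fun a => W a q' - W a p')) //; first by lia.
move=> a _; rewrite (@telescope_sumr_eq _ p' q' (fun b => W a.+1 b - W a b)) //.
- by rewrite /=; lia.
- by move=> b _; rewrite /Dm; lia.
Qed.

Lemma row_le1 a : (a < N)%N -> \sum_(0 <= b < N) Dm a b <= 1.
Proof.
move=> ha.
rewrite (@telescope_sumr_eq _ 0 N (fun b => W a.+1 b - W a b)) //; last first.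
  by move=> b _; rewrite /Dm; lia.
have := @W_stepi _ z x a N (leqnn N).
rewrite (W_gt z x (ltn0Sn a)); case: a ha => [|a] ha.
- rewrite W_pp; lia.
- rewrite (W_gt z x (ltn0Sn a)); lia.
Qed.

Lemma crit_uniq a b1 b2 : (a < N)%N -> (b1 < N)%N -> (b2 < N)%N ->
  critW a b1 -> critW a b2 -> b1 = b2.
Proof.
move=> ha h1 h2 c1 c2; apply/eqP; apply/negPn/negP => hne.
have := row_le1 ha.
rewrite big_mkord (bigD1 (Ordinal h1)) //= (bigD1 (Ordinal h2)) /=; last first.
  by rewrite -val_eqE /= eq_sym.
rewrite Dm_crit // Dm_crit // c1 c2.
set S := (X in _ + (_ + X) <= _).
have : 0 <= S by apply: sumr_ge0 => i _; apply: Dm_ge0.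
move: S => S H1 H2; rewrite /= in H2; lia.
Qed.

End Crit.

End MP4.
Import MP4.

Module MP5.
Local Open Scope ring_scope.

Fixpoint bits (l v : nat) : seq bool :=
  if l is l'.+1 then odd v :: bits l' v./2 else [::].
Fixpoint unbits (s : seq bool) : nat :=
  if s is b :: s' then (b + (unbits s').*2)%N else 0%N.

Lemma size_bits l v : size (bits l v) = l.
Proof. by elim: l v => [|l IH] v //=; rewrite IH. Qed.

Lemma unbitsK l v : (v < 2 ^ l)%N -> unbits (bits l v) = v.
Proof.
elim: l v => [|l IH] v /=; first by rewrite expn0; case: v.
move=> h; rewrite IH ?odd_double_half //.
rewrite -divn2 expnS in h *; lia.
Qed.

Lemma bits_inj l v1 v2 : (v1 < 2 ^ l)%N -> (v2 < 2 ^ l)%N ->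
  bits l v1 = bits l v2 -> v1 = v2.
Proof. by move=> h1 h2 e; rewrite -(unbitsK h1) -(unbitsK h2) e. Qed.

Definition vcode (w r : nat) (a b : int) : nat :=
  let k := ((b %/ r%:Z)%Z - (a %/ r%:Z)%Z) in
  if k <= - ((w %/ r).+2)%:Z then 0%N else absz (k + ((w %/ r).+2)%:Z).

Lemma divz_facts (a : int) (r : nat) : (0 < r)%N ->
  a = (a %/ r%:Z)%Z * r%:Z + (a %% r%:Z)%Z /\ 0 <= (a %% r%:Z)%Z < r%:Z.
Proof.
move=> hr; split; first exact: divz_eq.
apply/andP; split; [apply: modz_ge0 | apply: ltz_pmod]; lia.
Qed.

Lemma vcode_bound w r a b : (0 < r)%N -> b - a < w%:Z ->
  (vcode w r a b <= 2 * (w %/ r) + 3)%N.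
Proof.
move=> hr hab; rewrite /vcode.
have [ea /andP [ra1 ra2]] := divz_facts a hr; have [eb /andP [rb1 rb2]] := divz_facts b hr.
have ew := divn_eq w r; have hw := ltn_pmod w hr.
move: ea eb ew hw ra1 ra2 rb1 rb2.
set A := (a %/ r%:Z)%Z; set B := (b %/ r%:Z)%Z; set Q := (w %/ r)%N.
set ra := (a %% r%:Z)%Z; set rb := (b %% r%:Z)%Z; set rw := (w %% r)%N.
move=> ea eb ew hw ra1 ra2 rb1 rb2.
clearbody A B Q ra rb rw.
case: ifP => hk; first lia.
have : B - A <= Q%:Z + 1 by nia.
move: hk => /negbT hk; lia.
Qed.

Lemma mul_lt (r x y : int) : 0 < r -> x * r < y * r -> x < y.
Proof. by move=> hr; rewrite ltr_pM2r. Qed.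

Lemma code_ok w r i j a b b0 : (0 < r)%N -> (i %% r%:Z)%Z = 0 -> (j %% r%:Z)%Z = 0 ->
  j - i <= w%:Z -> i <= a -> a < j -> i <= b -> b < j ->
  vcode w r a b = vcode w r a b0 -> i <= b0 /\ b0 < j.
Proof.
move=> hr hi hj hij h1 h2 h3 h4; rewrite /vcode.
have hr' : 0 < r%:Z by lia.
have [ea /andP [ra1 ra2]] := divz_facts a hr; have [eb /andP [rb1 rb2]] := divz_facts b hr.
have [eb0 /andP [rc1 rc2]] := divz_facts b0 hr.
have [ei _] := divz_facts i hr; have [ej _] := divz_facts j hr.
rewrite hi addr0 in ei; rewrite hj addr0 in ej.
have ew := divn_eq w r; have hw := ltn_pmod w hr.
move: ea eb eb0 ei ej ew hw ra1 ra2 rb1 rb2 rc1 rc2.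
set A := (a %/ r%:Z)%Z; set B := (b %/ r%:Z)%Z; set B0 := (b0 %/ r%:Z)%Z.
set I := (i %/ r%:Z)%Z; set J := (j %/ r%:Z)%Z; set Q := (w %/ r)%N.
set ra := (a %% r%:Z)%Z; set rb := (b %% r%:Z)%Z; set rc := (b0 %% r%:Z)%Z; set rw := (w %% r)%N.
move=> ea eb eb0 ei ej ew hw ra1 ra2 rb1 rb2 rc1 rc2.
clearbody A B B0 I J Q ra rb rc rw.
have ew' : w%:Z = Q%:Z * r%:Z + rw%:Z by rewrite ew; lia.
have c1 : I < B + 1 by apply: (mul_lt hr'); lia.
have c2 : B < J by apply: (mul_lt hr'); lia.
have c3 : I < A + 1 by apply: (mul_lt hr'); lia.
have c4 : A < J by apply: (mul_lt hr'); lia.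
have c5 : J - I < Q%:Z + 1 by apply: (mul_lt hr'); lia.
clear ea eb ew ew' hw ra1 ra2 rb1 rb2 h1 h2 h3 h4 hij.
case: ifP => hk1; first by exfalso; clear - hk1 c1 c2 c3 c4 c5; lia.
move/negbT: hk1 => hk1.
case: ifP => hk2.
- move=> e; exfalso; move: e; clear - hk1 hk2 c1 c2 c3 c4 c5; lia.
- move/negbT: hk2 => hk2 e.
  have eB : B0 = B by clear - e hk1 hk2; lia.
  rewrite eB in eb0.
  have c6 : I * r%:Z <= B * r%:Z by rewrite ler_pM2r //; lia.
  have c7 : (B + 1) * r%:Z <= J * r%:Z by rewrite ler_pM2r //; lia.
  clear - eb0 rc1 rc2 ei ej c6 c7; split; lia.
Qed.

Lemma pow_bound q : (2 * q + 3 < 2 ^ (trunc_log 2 q).+3)%N.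
Proof.
have h := @trunc_log_ltn 2 q isT.
rewrite !expnS in h *; have : (0 < 2 ^ trunc_log 2 q)%N by rewrite expn_gt0.
lia.
Qed.

End MP5.
Import MP5.

Module MP6.
Local Open Scope ring_scope.

Lemma sum_ind (p q b0 : nat) :
  \sum_(p <= b < q) ((b == b0 : nat)%:Z) = (((p <= b0) && (b0 < q))%N : nat)%:Z.
Proof.
elim: q => [|q IH]; first by rewrite big_geq // ltn0 andbF.
case: (leqP p q) => hpq.
- rewrite big_nat_recr //= IH.
  case: (ltngtP b0 q) => h.
  + by rewrite ltnS (ltnW h) andbT addr0.
  + by rewrite ltnS (leqNgt b0 q) h !andbF.
  + by subst; rewrite andbF ltnSn andbT hpq.
- rewrite big_geq // ; case: (leqP p b0) => h /=; last by [].
  by rewrite ltnS leqNgt (leq_trans hpq h).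
Qed.

Section Main.
Variable T : eqType.
Variables (x : seq T) (y : seq T).
Local Notation m := (size x).
Local Notation n := (size y).
Local Notation z := (padded m y).
Local Notation N := (size z).
Local Notation W := (MP2.W z x).

Lemma sizeN : N = (n + m + m)%N.
Proof. by rewrite /padded !size_cat size_map !size_nseq; lia. Qed.

Lemma hsmW (p q : nat) : hsm x y (p%:Z - m%:Z) (q%:Z - m%:Z) = W p q.
Proof.
have e : forall k : nat, absz (k%:Z - m%:Z + m%:Z) = k by move=> k; rewrite subrK.
rewrite /hsm /psub !e /MP2.W /sub lerD2r lez_nat.
by case: ifP => // _; lia.
Qed.

Lemma in_dom_nat (p : nat) : in_dom m n (p%:Z - m%:Z) = (p <= N)%N.
Proof. rewrite sizeN /in_dom; apply/idP/idP; lia. Qed.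

Lemma in_dom_ex k : in_dom m n k -> exists2 p, k = p%:Z - m%:Z & (p <= N)%N.
Proof.
rewrite /in_dom sizeN => /andP [h1 h2]; exists (absz (k + m%:Z)); lia.
Qed.

Lemma critical_nat (a b : nat) : critical x y (a%:Z - m%:Z) (b%:Z - m%:Z) =
  [&& (a < N)%N, (b < N)%N & critW z x a b].
Proof.
have e : forall k : nat, k%:Z - m%:Z + 1 = (k.+1)%:Z - m%:Z by move=> k; lia.
rewrite /critical !e !in_dom_nat !hsmW /critW.
case: (leqP a.+1 N) => ha; case: (leqP b.+1 N) => hb /=.
- by rewrite (ltnW ha) (ltnW hb).
- by rewrite !andbF.
- by rewrite andbF.
- by rewrite andbF.
Qed.

End Main.

End MP6.
Import MP6.

Module MP7.
Local Open Scope ring_scope.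

Definition condf (code : int -> int -> seq bool) (store : int -> option (seq bool))
  (i j a : int) : bool :=
  match store a with
  | Some s => has (fun t : nat => code a (i + t%:Z) == s) (iota 0 (absz (j - i)%R))
  | None => false
  end.

Definition decf code store (i j : int) : int :=
  if i <= j then (j - i) - \sum_(0 <= t < absz (j - i)%R)
                               ((condf code store i j (i + t%:Z) : nat)%:Z)
  else j - i.

Section Key.
Variable T : eqType.
Variables (x : seq T) (y : seq T).
Local Notation m := (size x).
Local Notation n := (size y).
Local Notation z := (padded m y).
Local Notation N := (size z).
Local Notation W := (MP2.W z x).
Variables (w r : nat) (code : int -> int -> seq bool) (store : int -> option (seq bool)).
Hypothesis hr : (0 < r)%N.
Hypothesis CodeP : forall a b b0 i j : int, (i %% r%:Z)%Z = 0 -> (j %% r%:Z)%Z = 0 ->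
  j - i <= w%:Z -> i <= a -> a < j -> i <= b -> b < j -> b0 - a < w%:Z ->
  code a b = code a b0 -> i <= b0 /\ b0 < j.
Hypothesis Hs : forall a b, critical_wr w x y a b -> store a = Some (code a b).
Hypothesis Hn : forall a, (forall b, ~~ critical_wr w x y a b) -> store a = None.

Lemma store_none (a : nat) :
  (forall b : nat, (b < N)%N -> critW z x a b -> w%:Z <= b%:Z - a%:Z) ->
  store (a%:Z - m%:Z) = None.
Proof.
move=> H; apply: Hn => b'; apply/negP => /andP [hc hspan].
have hd : in_dom m n b' by case/and5P: hc => _ _ ? _ _.
case: (in_dom_ex hd) => b1 eb hb1; subst b'.
move: hc; rewrite critical_nat => /and3P [_ h1 h2].
have := H b1 h1 h2; lia.
Qed.

Lemma key (p q a : nat) : (p <= a)%N -> (a < q)%N -> (q <= N)%N -> (q - p <= w)%N ->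
  ((p%:Z - m%:Z) %% r%:Z)%Z = 0 -> ((q%:Z - m%:Z) %% r%:Z)%Z = 0 ->
  ((condf code store (p%:Z - m%:Z) (q%:Z - m%:Z) (a%:Z - m%:Z) : nat)%:Z)
  = \sum_(p <= b < q) Dm z x a b.
Proof.
move=> hpa haq hqN hw hip hiq.
have haN : (a < N)%N by apply: leq_trans hqN.
have rowD : forall b, (p <= b < q)%N -> Dm z x a b = (critW z x a b : nat)%:Z.
  by move=> b /andP [_ hb]; apply: (@Dm_crit _ z x a b haN); apply: leq_trans hqN.
rewrite (eq_big_nat _ _ rowD).
have eji : absz ((q%:Z - m%:Z) - (p%:Z - m%:Z))%R = (q - p)%N by lia.
rewrite /condf eji.
case: (boolP (has (critW z x a) (iota 0 N))) => [/hasP [b0 hb0 c0] | hno].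
- rewrite mem_iota add0n leq0n /= in hb0.
  have U : forall b, (b < N)%N -> critW z x a b = (b == b0).
    move=> b hb; apply/idP/eqP => [cb|->] //; exact: crit_uniq haN hb hb0 cb c0.
  rewrite (@eq_big_nat _ _ _ p q _ (fun b => (b == b0 : nat)%:Z)); last first.
    by move=> b /andP [_ hb]; rewrite U //; apply: leq_trans hqN.
  rewrite sum_ind.
  have cr : critical x y (a%:Z - m%:Z) (b0%:Z - m%:Z) by rewrite critical_nat haN hb0.
  case: (ltP (b0%:Z - a%:Z) w%:Z) => hspan.
  + rewrite (Hs (b := b0%:Z - m%:Z)); last by rewrite /critical_wr cr /=; lia.
    congr (Posz (nat_of_bool _)); apply/hasP/idP.
    * move=> [t]; rewrite mem_iota add0n => ht /eqP e.
      have := CodeP hip hiq _ _ _ _ _ _ e; lia.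
    * move=> /andP [h1 h2]; exists (b0 - p)%N; first by rewrite mem_iota; lia.
      rewrite (_ : (p%:Z - m%:Z) + (b0 - p)%N%:Z = b0%:Z - m%:Z) //; lia.
  + rewrite store_none //; last first.
      by move=> b hb cb; rewrite (U b hb) in cb; rewrite (eqP cb).
    rewrite /=; case: (leqP p b0) => //= _; case: ltnP => //; lia.
- rewrite store_none; last first.
    move=> b hb cb; exfalso; move/hasP: hno; apply; exists b => //.
    by rewrite mem_iota add0n.
  rewrite big1_seq // => b; rewrite mem_index_iota => /andP [_ hb].
  case cb: (critW z x a b) => //; exfalso; move/hasP: hno; apply; exists b => //.
  by rewrite mem_iota add0n leq0n /=; case/andP: hb => _ hb; exact: leq_trans hb hqN.
Qed.

Lemma dec_ok i j : defined_wr w r x y i j -> decf code store i j = hsm x y i j.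
Proof.
case/and5P => hi hj hw hri hrj.
case: (in_dom_ex hi) => p ep hp; case: (in_dom_ex hj) => q eq hq; subst i j.
rewrite hsmW /decf.
case: ifP => hij.
- have hpq : (p <= q)%N by lia.
  have eji : absz ((q%:Z - m%:Z) - (p%:Z - m%:Z))%R = (q - p)%N by lia.
  rewrite eji.
  have T2 := @tele2 _ z x _ _ _ _ hpq hpq.
  have Wqp : W q p = p%:Z - q%:Z.
    case: (ltngtP p q) => h; [by rewrite W_gt | lia | by subst; rewrite W_pp; lia].
  have S : \sum_(0 <= t < q - p)
      ((condf code store (p%:Z - m%:Z) (q%:Z - m%:Z) ((p%:Z - m%:Z) + t%:Z) : nat)%:Z)
      = \sum_(p <= a < q) \sum_(p <= b < q) Dm z x a b.
    rewrite [RHS](_ : _ = \sum_(0 + p <= a < q) \sum_(p <= b < q) Dm z x a b) // big_addn; apply: eq_big_nat => t /andP [_ ht].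
    rewrite -key //; try lia.
    by rewrite (_ : (p%:Z - m%:Z) + t%:Z = (t + p)%N%:Z - m%:Z) //; lia.
  rewrite S T2 !W_pp Wqp; lia.
- rewrite W_gt; lia.
Qed.

End Key.

End MP7.
Import MP7.


Local Open Scope ring_scope.

Theorem proposition2 :
  exists C : nat, forall w r : nat, (0 < w)%N -> (0 < r)%N ->
  exists (code : int -> int -> seq bool)
         (dec : nat -> nat -> (int -> option (seq bool)) -> int -> int -> int),
    (forall a b : int, b - a < w%:Z ->
       (size (code a b) <= C * (trunc_log 2 (w %/ r)).+1)%N) /\
    forall (T : eqType) (x y : seq T) (store : int -> option (seq bool)),
      (forall a b, critical_wr w x y a b -> store a = Some (code a b)) ->
      (forall a, (forall b, ~~ critical_wr w x y a b) -> store a = None) ->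
      forall i j, defined_wr w r x y i j ->
        dec (size x) (size y) store i j = hsm x y i j.
Proof.
exists 3%N => w r hw hr.
pose Lb := (trunc_log 2 (w %/ r)).+3.
pose code := fun a b => bits Lb (vcode w r a b).
exists code, (fun _ _ store i j => decf code store i j).
split.
- by move=> a b _; rewrite /code size_bits /Lb; lia.
- move=> T x y store Hs Hn i j Hd.
  apply: (dec_ok hr _ Hs Hn Hd).
  move=> a b b0 i' j' hi hj hij h1 h2 h3 h4 h5 e.
  apply: (code_ok hr hi hj hij h1 h2 h3 h4).
  apply: (bits_inj _ _ e).
  + have hb : b - a < w%:Z by lia.
    exact: leq_ltn_trans (vcode_bound hr hb) (pow_bound _).
  + exact: leq_ltn_trans (vcode_bound hr h5) (pow_bound _).
Qed.
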